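(* Consider the FlexPD-G iterates described in the context with $\alpha,\beta>0$ and integer $T\ge1$, and let $c_1=1+\alpha\rho(B)$. Then for any $\bar p,\bar q>1$ and every $k\ge0$, \[\|x^{k+1,T-1}-x^*\|^2+\frac{\alpha}{\beta}\|\lambda^k-\lambda^*\|^2+\alpha\rho(B)\|x^k-x^*\|^2\le\Gamma_G^{T-1}\Big(c_1\|x^k-x^*\|^2+\frac{\alpha}{\beta}\|\lambda^k-\lambda^*\|^2\Big),\] where \[\Gamma_G=\max\Big\{\bar p(1+\alpha L)^2,\;1+\frac{\bar p\bar q\alpha\beta\rho(AA')}{\bar p-1},\;1+\frac{\bar p\bar q\alpha\rho(B)}{(\bar p-1)(\bar q-1)}\Big\}.\]
   Context: Setting: $n$ agents are connected by a connected undirected graph with edge set $\mathcal E$, $\epsilon=|\mathcal E|$. For $x\in\mathbb R^n$ let $f(x)=\sum_{i=1}^n f_i(x_i)$, where each $f_i:\mathbb R\to\mathbb R$ is twice differentiable with $m\le f_i''\le L$ for constants $0<m\le L$; $\nabla f(x)=(f_1'(x_1),\dots,f_n'(x_n))'$. $A\in\mathbb R^{\epsilon\times n}$ is the edge–node incidence matrix (null space spanned by the all-ones vector). $B\in\mathbb R^{n\times n}$ is symmetric positive semidefinite with the same null space as $A$, off-diagonal entries nonzero only on edges, and $\rho(B)<m$. $x^*$ is the unique minimizer of $f$ subject to $Ax=0$ and $\lambda^*$ a Lagrange multiplier with $\nabla f(x^* )+A'\lambda^*=0$, $Ax^*=0$, $Bx^*=0$, chosen in the column space of $A$. FlexPD-G: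 given $\alpha,\beta>0$, $T\ge1$, $x^0$ arbitrary, $\lambda^0=0$; for $k\ge0$: $x^{k+1,0}=x^k$; for $t=1,\dots,T$, $x^{k+1,t}=x^{k+1,t-1}-\alpha\nabla f(x^{k+1,t-1})-\alpha A'\lambda^k-\alpha Bx^k$; then $x^{k+1}=x^{k+1,T}$, $\lambda^{k+1}=\lambda^k+\beta Ax^{k+1}$. Notation: $\rho(S)$ largest eigenvalue of a symmetric matrix $S$; $\|\cdot\|$ Euclidean norm. *)

(* Defs.v *)
From HB Require Import structures.
From mathcomp Require Import all_boot all_order all_algebra.
From mathcomp Require Import all_classical all_reals all_analysis.
Set Implicit Arguments. Unset Strict Implicit. Unset Printing Implicit Defensive.
Import Order.TTheory GRing.Theory Num.Theory.
Local Open Scope ring_scope.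

Section Defs.
Variable R : realType.

Definition sqnorm (p : nat) (v : 'cV[R]_p) : R := \sum_(i < p) (v i 0) ^+ 2.

Definition is_rho (p : nat) (S : 'M[R]_p) (r : R) : Prop :=
  eigenvalue S r /\ (forall a, eigenvalue S a -> a <= r).

(* Graph on nodes 'I_n with eps edges; edge k joins (e k).1 and (e k).2
   (an arbitrary orientation, used for the incidence matrix). *)
Definition simple_edges (n eps : nat) (e : 'I_eps -> 'I_n * 'I_n) : Prop :=
  (forall k, (e k).1 != (e k).2) /\
  (forall k l, k != l -> e k <> e l /\ e k <> ((e l).2, (e l).1)).

Definition adj (n eps : nat) (e : 'I_eps -> 'I_n * 'I_n) : rel 'I_n :=
  fun i j => [exists k, (e k == (i, j)) || (e k == (j, i))].

Definition connected_graph (n eps : nat) (e : 'I_eps -> 'I_n * 'I_n) : Prop :=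
  forall i j, connect (adj e) i j.

Definition incidence (n eps : nat) (e : 'I_eps -> 'I_n * 'I_n) : 'M[R]_(eps, n) :=
  \matrix_(k, i) (if i == (e k).1 then 1 else if i == (e k).2 then -1 else 0).

Definition sumf (n : nat) (f : 'I_n -> R -> R) (x : 'cV[R]_n) : R :=
  \sum_(i < n) f i (x i 0).

Definition gradf (n : nat) (f : 'I_n -> R -> R) (x : 'cV[R]_n) : 'cV[R]_n :=
  \col_i (derive1 (f i) (x i 0)).

(* inner iterate x^{k+1,t} from (x^k, lambda^k) *)
Definition flex_inner (n eps : nat) (f : 'I_n -> R -> R) (A : 'M[R]_(eps, n))
  (B : 'M[R]_n) (alpha : R) (xk : 'cV[R]_n) (lk : 'cV[R]_eps) (t : nat) : 'cV[R]_n :=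
  iter t (fun y => y - alpha *: gradf f y - alpha *: (A^T *m lk) - alpha *: (B *m xk)) xk.

Definition flex_state (n eps : nat) (f : 'I_n -> R -> R) (A : 'M[R]_(eps, n))
  (B : 'M[R]_n) (alpha beta : R) (T : nat) (x0 : 'cV[R]_n) (k : nat)
  : 'cV[R]_n * 'cV[R]_eps :=
  iter k (fun s => let xn := flex_inner f A B alpha s.1 s.2 T in
                   (xn, s.2 + beta *: (A *m xn))) (x0, 0).

End Defs.

(* Main.v *)
Require Import Defs.
From HB Require Import structures.
From mathcomp Require Import all_boot all_order all_algebra.
From mathcomp Require Import all_classical all_reals all_analysis.
From mathcomp Require Import ring lra.
Import Order.TTheory GRing.Theory Num.Theory numFieldNormedType.Exports.
Set Implicit Arguments. Unset Strict Implicit. Unset Printing Implicit Defensive.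
Local Open Scope classical_set_scope.
Local Open Scope ring_scope.

Section Ray.
Variable R : realType.

Definition bl n (S : 'M[R]_n) (x y : 'rV[R]_n) : R := (x *m S *m y^T) 0 0.

Lemma blDl n (S : 'M[R]_n) (x y z : 'rV[R]_n) : bl S (x + y) z = bl S x z + bl S y z.
Proof. by rewrite /bl !mulmxDl mxE. Qed.
Lemma blDr n (S : 'M[R]_n) (x y z : 'rV[R]_n) : bl S x (y + z) = bl S x y + bl S x z.
Proof. by rewrite /bl linearD /= !mulmxDr mxE. Qed.
Lemma blZl n (S : 'M[R]_n) a (x y : 'rV[R]_n) : bl S (a *: x) y = a * bl S x y.
Proof. by rewrite /bl -!scalemxAl [LHS]mxE. Qed.
Lemma blZr n (S : 'M[R]_n) a (x y : 'rV[R]_n) : bl S x (a *: y) = a * bl S x y.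
Proof. by rewrite /bl linearZ /= -!scalemxAr [LHS]mxE. Qed.
Lemma blC n (S : 'M[R]_n) (x y : 'rV[R]_n) : S^T = S -> bl S x y = bl S y x.
Proof.
move=> HS; rewrite /bl -[in LHS](trmxK (x *m S *m y^T)) mxE.
by rewrite !trmx_mul trmxK HS mulmxA.
Qed.
Lemma blE n (S : 'M[R]_n) (x y : 'rV[R]_n) :
  bl S x y = \sum_j (\sum_i x 0 i * S i j) * y 0 j.
Proof. by rewrite /bl !mxE; apply: eq_bigr => j _; rewrite !mxE. Qed.
Lemma bl1 n (x : 'rV[R]_n) : bl 1%:M x x = \sum_j x 0 j ^+ 2.
Proof.
rewrite blE; apply: eq_bigr => j _.
rewrite (bigD1 j) //= big1 ?addr0; first by rewrite mxE eqxx mulr1 expr2.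
by move=> i /negbTE ij; rewrite mxE ij mulr0.
Qed.
Lemma bl1_ge0 n (x : 'rV[R]_n) : 0 <= bl 1%:M x x.
Proof. by rewrite bl1 sumr_ge0 // => i _; rewrite sqr_ge0. Qed.
Lemma bl1_eq0 n (x : 'rV[R]_n) : bl 1%:M x x = 0 -> x = 0.
Proof.
rewrite bl1 => /psumr_eq0P H; apply/rowP => j; rewrite mxE.
by apply/eqP; rewrite -sqrf_eq0; apply/eqP; apply: H => // i _; rewrite sqr_ge0.
Qed.

Lemma sum_cont n (T : topologicalType) (F : 'I_n -> T -> R) :
  (forall i, continuous (F i)) -> continuous (fun x => \sum_(i < n) F i x).
Proof.
elim: n F => [|n IH] F HF.
  have -> : (fun x => \sum_(i < 0) F i x) = fun=> 0 by apply: funext => x; rewrite big_ord0.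
  exact: cst_continuous.
have -> : (fun x => \sum_(i < n.+1) F i x) =
   (fun x => \sum_(i < n) F (widen_ord (leqnSn n) i) x) + F ord_max.
  by apply: funext => x; rewrite big_ord_recr.
move=> x; apply: continuousD; last exact: HF.
by apply: IH => i; exact: HF.
Qed.

Lemma bl_cont n (S : 'M[R]_n) : continuous (fun x : 'rV[R]_n => bl S x x).
Proof.
have -> : (fun x : 'rV[R]_n => bl S x x) =
  (fun x => \sum_j (\sum_i x 0 i * S i j) * x 0 j).
  by apply: funext => x; rewrite blE.
apply: sum_cont => j x; apply: continuousM; last exact: coord_continuous.
have := (@sum_cont n _ (fun i (x : 'rV[R]_n) => x 0 i * S i j)); apply => // i y.
apply: continuousM; first exact: coord_continuous.
exact: cst_continuous.
Qed.


Lemma blSB n (S : 'M[R]_n) M (x y : 'rV[R]_n) :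
  bl (S - M%:M) x y = bl S x y - M * bl 1%:M x y.
Proof.
have E : forall A B : 'M[R]_1, (A - B) 0 0 = A 0 0 - B 0 0 by move=> A B; rewrite !mxE.
have E2 : forall a (A : 'M[R]_1), (a *: A) 0 0 = a * A 0 0 by move=> a A; rewrite !mxE.
by rewrite /bl mulmxBr mulmxBl E mul_mx_scalar -scalemxAl E2 mulmx1.
Qed.

Lemma bl0 n (S : 'M[R]_n) : bl S 0 0 = 0.
Proof. by rewrite /bl !mul0mx mxE. Qed.

Lemma rayleigh n (S : 'M[R]_n) r : S^T = S ->
  (forall a, eigenvalue S a -> a <= r) ->
  forall v, bl S v v <= r * bl 1%:M v v.
Proof.
case: n S => [|k] S HS Hr v.
  by rewrite !blE !big_ord0 mulr0.
pose A := [set v : 'rV[R]_k.+1 | bl 1%:M v v = 1]%classic.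
have A0 : (A !=set0)%classic.
  exists (delta_mx ord0 ord0 : 'rV[R]_k.+1); rewrite /A /= /bl mulmx1 trmx_delta mul_delta_mx mxE.
  by rewrite !eqxx.
have cA : compact A.
  apply: bounded_closed_compact.
    exists 1; split; first by rewrite realE ler01.
    move=> M M1 u Au /=.
    rewrite [`|u|]/Num.norm /= mx_normrE; apply: bigmax_le.
      by rewrite (le_trans ler01) // ltW.
    move=> [i j] _ /=; rewrite (ord1 i).
    have hj : u 0 j ^+ 2 <= 1.
      rewrite -Au bl1 (bigD1 j) //= lerDl sumr_ge0 // => l _.
      by rewrite sqr_ge0.
    have hn : `|u 0 j| ^+ 2 = u 0 j ^+ 2 by rewrite real_normK // num_real.
    have hp : 0 <= `|u 0 j| by [].
    nra.
  change (closed ((fun v : 'rV[R]_k.+1 => bl 1%:M v v) @^-1` [set x : R | x = 1])%classic).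
  apply: preimage_closed; last exact: closed_eq.
  by move=> x _; exact: bl_cont.
have [c cA' cmax] := EVT_max_rV A0 cA (continuous_subspaceT (@bl_cont _ S)).
move: cA'; rewrite inE /A /= => c1.
set M := bl S c c in cmax.
have H1 : forall v, bl S v v <= M * bl 1%:M v v.
  move=> u; have [->|u0] := eqVneq u 0; first by rewrite !bl0 mulr0.
  have q0 : 0 < bl 1%:M u u.
    rewrite lt_neqAle bl1_ge0 andbT eq_sym; apply/negP => /eqP /bl1_eq0.
    by move/eqP; rewrite (negbTE u0).
  set q := bl 1%:M u u in q0 *.
  set s := Num.sqrt q.
  have s0 : 0 < s by rewrite sqrtr_gt0.
  have ss : s * s = q by rewrite -expr2 sqr_sqrtr // ltW.
  have si : s * s^-1 = 1 by rewrite mulfV // gt_eqF.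
  have := cmax (s^-1 *: u); rewrite inE /A /= !blZl !blZr.
  have -> : s^-1 * (s^-1 * bl 1%:M u u) = 1.
    by rewrite -/q -ss mulrA -invfM mulVf // mulf_neq0 // gt_eqF.
  move=> /(_ erefl) h.
  set X := bl S u u in h *.
  set i := s^-1 in si h.
  have h2 := ler_wpM2l (ltW (mulr_gt0 s0 s0)) h.
  have e : s * s * (i * (i * X)) = (s * i) * (s * i) * X by ring.
  rewrite si !mul1r in e.
  by rewrite -ss -{1}e [M * _]mulrC.
pose S' := S - M%:M.
have HS' : S'^T = S' by rewrite /S' linearB /= HS tr_scalar_mx.
have H2 : forall v, bl S' v v <= 0.
  by move=> u; rewrite /S' blSB subr_le0.
have Hc : bl S' c c = 0 by rewrite /S' blSB c1 mulr1 subrr.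
pose w := c *m S'.
have HP : bl S' c w = bl 1%:M w w by rewrite /bl mulmx1.
have P0 : bl 1%:M w w = 0.
  apply/eqP; rewrite eq_le bl1_ge0 andbT; rewrite leNgt; apply/negP => P0.
  set P := bl 1%:M w w in P0 HP.
  set D := bl S' w w.
  have D0 : D <= 0 by exact: H2.
  pose t := P / (1 - D).
  have t0 : 0 < t by rewrite divr_gt0 // subr_gt0 (le_lt_trans D0) // ltr01.
  have tD : t * (1 - D) = P by rewrite /t mulrVK // unitfE gt_eqF // subr_gt0 (le_lt_trans D0) // ltr01.
  have := H2 (c + t *: w).
  rewrite !blDl !blDr !blZl !blZr Hc HP (@blC _ S' w c HS') HP -/D.
  have e : t * (t * D) = t * t - t * P by rewrite -tD; ring.
  have tP := mulr_gt0 t0 P0; have tt := mulr_gt0 t0 t0.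
  rewrite e; lra.
have w0 : w = 0 by exact: bl1_eq0.
have : eigenvalue S M.
  apply/eigenvalueP; exists c.
    apply/eqP; rewrite -subr_eq0 -mul_mx_scalar -mulmxBr; exact/eqP.
  apply/negP => /eqP c0; move: c1; rewrite c0 bl0 => /eqP.
  by rewrite eq_sym oner_eq0.
move/Hr => Mr.
apply: (le_trans (H1 v)); apply: ler_wpM2r => //; exact: bl1_ge0.
Qed.


Lemma sqnorm_bl p (v : 'cV[R]_p) : sqnorm v = bl 1%:M v^T v^T.
Proof. by rewrite bl1 /sqnorm; apply: eq_bigr => i _; rewrite mxE. Qed.

Lemma sqnorm_ge0 p (v : 'cV[R]_p) : 0 <= sqnorm v.
Proof. by rewrite sqnorm_bl bl1_ge0. Qed.

Lemma sqnorm_le_coord p (v1 v2 : 'cV[R]_p) K :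
  (forall i, v1 i 0 ^+ 2 <= K * v2 i 0 ^+ 2) -> sqnorm v1 <= K * sqnorm v2.
Proof. by move=> H; rewrite /sqnorm mulr_sumr; apply: ler_sum => i _. Qed.

Lemma sqnorm_split p (v1 v2 : 'cV[R]_p) P : 1 < P ->
  sqnorm (v1 + v2) <= P * sqnorm v1 + P / (P - 1) * sqnorm v2.
Proof.
move=> P1; rewrite /sqnorm !mulr_sumr -big_split; apply: ler_sum => i _ /=.
rewrite mxE; set a := v1 i 0; set b := v2 i 0.
have d0 : P - 1 != 0 by rewrite subr_eq0 gt_eqF.
have e : P * a ^+ 2 + P / (P - 1) * b ^+ 2 - (a + b) ^+ 2 =
   ((P - 1) * a - b) ^+ 2 / (P - 1) by field.
rewrite -subr_ge0 e divr_ge0 // ?sqr_ge0 // subr_ge0 ltW //.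
Qed.

Lemma sqnormZ p c (v : 'cV[R]_p) : sqnorm (c *: v) = c ^+ 2 * sqnorm v.
Proof. by rewrite /sqnorm mulr_sumr; apply: eq_bigr => i _; rewrite mxE exprMn. Qed.

Lemma sqnorm_AT p q (A : 'M[R]_(p, q)) (u : 'cV[R]_p) :
  sqnorm (A^T *m u) = bl (A *m A^T) u^T u^T.
Proof. by rewrite sqnorm_bl /bl mulmx1 !trmx_mul !trmxK !mulmxA. Qed.

Lemma rayleigh_col n (S : 'M[R]_n) r (u : 'cV[R]_n) : S^T = S ->
  (forall a, eigenvalue S a -> a <= r) -> bl S u^T u^T <= r * sqnorm u.
Proof. by move=> HS Hr; rewrite sqnorm_bl; exact: rayleigh. Qed.

Lemma eig_psd n (B : 'M[R]_n) a :
  (forall v : 'cV[R]_n, 0 <= (v^T *m B *m v) 0 0) -> eigenvalue B a -> 0 <= a.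
Proof.
move=> H /eigenvalueP [v vB v0].
have := H v^T; rewrite trmxK vB -scalemxAl mxE.
have q0 : 0 < bl 1%:M v v.
  rewrite lt_neqAle bl1_ge0 andbT eq_sym; apply/negP => /eqP /bl1_eq0.
  by move/eqP; rewrite (negbTE v0).
move: q0; rewrite /bl mulmx1 => q0.
by rewrite pmulr_lge0.
Qed.

Lemma eigBB n (B : 'M[R]_n) rB :
  (forall v : 'cV[R]_n, 0 <= (v^T *m B *m v) 0 0) ->
  (forall a, eigenvalue B a -> a <= rB) ->
  forall mu, eigenvalue (B *m B) mu -> mu <= rB ^+ 2.
Proof.
move=> Hpsd Hr mu /eigenvalueP [v vBB v0].
have [mu0|mu0] := ltP mu 0.
  by rewrite (le_trans (ltW mu0)) // sqr_ge0.
pose s := Num.sqrt mu.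
have s0 : 0 <= s by rewrite sqrtr_ge0.
have ss : s * s = mu by rewrite -expr2 sqr_sqrtr.
pose u := v *m B + s *: v.
have uB : u *m B = s *: u.
  rewrite /u mulmxDl -mulmxA vBB -scalemxAl scalerDr scalerA ss addrC //.
have [u0|u0] := eqVneq u 0.
  have : eigenvalue B (- s).
    apply/eigenvalueP; exists v => //.
    by move/eqP: u0; rewrite /u addr_eq0 => /eqP ->; rewrite scaleNr.
  move/(eig_psd Hpsd); rewrite oppr_ge0 => sle.
  have s00 : s = 0 by apply/eqP; rewrite eq_le sle s0.
  by rewrite -ss s00 mulr0 sqr_ge0.
have : eigenvalue B s by apply/eigenvalueP; exists u.
move/Hr => srB.
by rewrite -ss expr2 ler_pM.
Qed.

Lemma lipschitz_deriv (g : R -> R) L :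
  (forall x, derivable g x 1) -> (forall x, `|derive1 g x| <= L) ->
  forall a b, `|g b - g a| <= L * `|b - a|.
Proof.
move=> dg Lg.
have key : forall a b, a < b -> `|g b - g a| <= L * `|b - a|.
  move=> a b ab.
  have hd : forall x, x \in `]a, b[%R -> is_derive x 1 g (derive1 g x).
    by move=> x _; rewrite derive1E; exact: derivableP.
  have hc : {within `[a, b], continuous g}.
    by apply: derivable_within_continuous => x _; exact: dg.
  have [c _ ->] := MVT ab hd hc.
  by rewrite normrM ler_wpM2r.
move=> a b; case: (ltgtP a b) => [ab|ba|->]; first exact: key.
  by rewrite distrC (distrC b); exact: key.
by rewrite !subrr normr0 mulr0.
Qed.

End Ray.

Unset Implicit Arguments.
Theorem lemma3p9 (R : realType) (n eps : nat) (e : 'I_eps -> 'I_n * 'I_n)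
  (f : 'I_n -> R -> R) (m L : R) (B : 'M[R]_n)
  (rhoB rhoAA : R) (xstar : 'cV[R]_n) (lstar : 'cV[R]_eps)
  (alpha beta : R) (T : nat) (x0 : 'cV[R]_n) (pbar qbar : R) (k : nat) :
  simple_edges e -> connected_graph e ->
  0 < m -> m <= L ->
  (forall i x, derivable (f i) x 1 /\ derivable (derive1 (f i)) x 1) ->
  (forall i x, m <= derive1 (derive1 (f i)) x <= L) ->
  B^T = B -> (forall v : 'cV[R]_n, 0 <= (v^T *m B *m v) 0 0) ->
  (forall v : 'cV[R]_n, B *m v = 0 <-> incidence R e *m v = 0) ->
  (forall i j, i != j -> B i j != 0 -> adj e i j) ->
  is_rho B rhoB -> rhoB < m ->
  is_rho (incidence R e *m (incidence R e)^T) rhoAA ->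
  incidence R e *m xstar = 0 ->
  (forall x, incidence R e *m x = 0 -> sumf f xstar <= sumf f x) ->
  (forall y, incidence R e *m y = 0 ->
     (forall x, incidence R e *m x = 0 -> sumf f y <= sumf f x) -> y = xstar) ->
  gradf f xstar + (incidence R e)^T *m lstar = 0 ->
  B *m xstar = 0 ->
  (exists y : 'cV[R]_n, lstar = incidence R e *m y) ->
  0 < alpha -> 0 < beta -> (1 <= T)%N ->
  1 < pbar -> 1 < qbar ->
  let A := incidence R e in
  let xk := (flex_state f A B alpha beta T x0 k).1 in
  let lk := (flex_state f A B alpha beta T x0 k).2 in
  let c1 := 1 + alpha * rhoB in
  let Gamma := Num.max (pbar * (1 + alpha * L) ^+ 2)
                 (Num.max (1 + pbar * qbar * alpha * beta * rhoAA / (pbar - 1))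
                          (1 + pbar * qbar * alpha * rhoB / ((pbar - 1) * (qbar - 1)))) in
  sqnorm (flex_inner f A B alpha xk lk T.-1 - xstar)
    + alpha / beta * sqnorm (lk - lstar) + alpha * rhoB * sqnorm (xk - xstar)
  <= Gamma ^+ T.-1 * (c1 * sqnorm (xk - xstar) + alpha / beta * sqnorm (lk - lstar)).
Proof.
move=> _ _ m0 mL hder hbd HB Hpsd _ _ [eB HrB] rBm [_ HrA] _ _ _ hopt Bxs _ a0 b0 T1 p1 q1.
cbv zeta.
set A := incidence R e.
set xk := (flex_state f A B alpha beta T x0 k).1.
set lk := (flex_state f A B alpha beta T x0 k).2.
set c1 := 1 + alpha * rhoB.
set Gamma := Num.max (pbar * _) _.
have rB0 : 0 <= rhoB := eig_psd Hpsd eB.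
have Lip : forall i a b, `|derive1 (f i) b - derive1 (f i) a| <= L * `|b - a|.
  move=> i; apply: lipschitz_deriv; first by move=> x; exact: (hder i x).2.
  move=> x; have /andP[h1 h2] := hbd i x.
  by rewrite ger0_norm // (le_trans (ltW m0) h1).
have HAA : forall u : 'cV[R]_eps, sqnorm (A^T *m u) <= rhoAA * sqnorm u.
  move=> u; rewrite sqnorm_AT; apply: rayleigh_col => //.
  by rewrite trmx_mul trmxK.
have HBB : forall w : 'cV[R]_n, sqnorm (B *m w) <= rhoB ^+ 2 * sqnorm w.
  move=> w; rewrite -{1}HB sqnorm_AT HB; apply: rayleigh_col.
    by rewrite trmx_mul HB.
  exact: eigBB.
pose F := fun y => y - alpha *: gradf f y - alpha *: (A^T *m lk) - alpha *: (B *m xk).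
set U := sqnorm (lk - lstar).
set W := sqnorm (xk - xstar).
have hg : gradf f xstar = - (A^T *m lstar).
  by apply/eqP; rewrite -addr_eq0; apply/eqP.
have step : forall y, sqnorm (F y - xstar) <=
   pbar * ((1 + alpha * L) ^+ 2 * sqnorm (y - xstar)) + pbar / (pbar - 1) *
   (alpha ^+ 2 * (qbar * (rhoAA * U) + qbar / (qbar - 1) * (rhoB ^+ 2 * W))).
  move=> y.
  have dec : F y - xstar = ((y - xstar) - alpha *: (gradf f y - gradf f xstar))
     + (- alpha) *: (A^T *m (lk - lstar) + B *m (xk - xstar)).
    rewrite hg !mulmxBr Bxs subr0 /F.
    move: (gradf f y) (A^T *m lk) (A^T *m lstar) (B *m xk) => g1 a1 a2 b1.
    by apply/colP => i; rewrite !mxE; ring.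
  rewrite dec; apply: le_trans (sqnorm_split _ _ p1) _; rewrite sqnormZ sqrrN.
  have ha : sqnorm (y - xstar - alpha *: (gradf f y - gradf f xstar))
      <= (1 + alpha * L) ^+ 2 * sqnorm (y - xstar).
    apply: sqnorm_le_coord => i; rewrite !mxE.
    have hL := Lip i (xstar i 0) (y i 0).
    set d := y i 0 - xstar i 0 in hL *.
    set D := derive1 (f i) (y i 0) - derive1 (f i) (xstar i 0) in hL *.
    have h1 : `|d - alpha * D| <= (1 + alpha * L) * `|d|.
      apply: le_trans (ler_normB _ _) _; rewrite normrM gtr0_norm //.
      have := ler_wpM2l (ltW a0) hL; lra.
    have hK : 0 <= (1 + alpha * L) * `|d|.
      by apply: le_trans h1.
    rewrite -[(d - _) ^+ 2]real_normK ?num_real // -[d ^+ 2]real_normK ?num_real //.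
    by rewrite -exprMn ler_sqr.
  have hb : sqnorm (A^T *m (lk - lstar) + B *m (xk - xstar)) <=
      qbar * (rhoAA * U) + qbar / (qbar - 1) * (rhoB ^+ 2 * W).
    apply: le_trans (sqnorm_split _ _ q1) _.
    apply: lerD; apply: ler_wpM2l; [lra|exact: HAA| |exact: HBB].
    by rewrite divr_ge0 //; lra.
  apply: lerD; first by apply: ler_wpM2l => //; lra.
  apply: ler_wpM2l; first by rewrite divr_ge0 //; lra.
  by apply: ler_wpM2l => //; rewrite sqr_ge0.
have G1 : pbar * (1 + alpha * L) ^+ 2 <= Gamma by rewrite /Gamma !le_max lexx.
have G2 : 1 + pbar * qbar * alpha * beta * rhoAA / (pbar - 1) <= Gamma
  by rewrite /Gamma !le_max lexx !orbT.
have G3 : 1 + pbar * qbar * alpha * rhoB / ((pbar - 1) * (qbar - 1)) <= Gamma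
  by rewrite /Gamma !le_max lexx !orbT.
have G0 : 0 <= Gamma.
  apply: le_trans G1; apply: mulr_ge0; [lra|exact: sqr_ge0].
have U0 : 0 <= U by exact: sqnorm_ge0.
have W0 : 0 <= W by exact: sqnorm_ge0.
have pn0 : pbar - 1 != 0 by rewrite subr_eq0 gt_eqF.
have qn0 : qbar - 1 != 0 by rewrite subr_eq0 gt_eqF.
have bn0 : beta != 0 by rewrite gt_eqF.
have ab0 : 0 <= alpha / beta by rewrite divr_ge0 // ltW.
have e2 : alpha / beta * (1 + pbar * qbar * alpha * beta * rhoAA / (pbar - 1)) * U
   = alpha / beta * U + pbar / (pbar - 1) * (alpha ^+ 2 * (qbar * (rhoAA * U))).
  by clearbody U; field; rewrite ?pn0 ?bn0.
have e3 : alpha * rhoB * (1 + pbar * qbar * alpha * rhoB / ((pbar - 1) * (qbar - 1))) * W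
   = alpha * rhoB * W + pbar / (pbar - 1) * (alpha ^+ 2 * (qbar / (qbar - 1) * (rhoB ^+ 2 * W))).
  by clearbody W; field; rewrite ?pn0 ?qn0.
have i2 := ler_wpM2r U0 (ler_wpM2l ab0 G2).
have i3 := ler_wpM2r W0 (ler_wpM2l (mulr_ge0 (ltW a0) rB0) G3).
have claim : forall t, sqnorm (iter t F xk - xstar) + alpha / beta * U + alpha * rhoB * W
    <= Gamma ^+ t * (c1 * W + alpha / beta * U).
  elim=> [|t IH].
    by rewrite /= expr0 mul1r /c1 -/W; clearbody U W; lra.
  rewrite iterS exprS -(mulrA Gamma); apply: le_trans _ (ler_wpM2l G0 IH).
  have st := step (iter t F xk).
  set E := sqnorm (iter t F xk - xstar) in st *.
  have E0 : 0 <= E by exact: sqnorm_ge0.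
  have i1 := ler_wpM2r E0 G1.
  lra.
exact: claim T.-1.
Qed.
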